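(* Let $C\ge 3$ and $2\le\ell<C$ be integers, and let $r_1=1$ and $r_2,\dots,r_\ell\in(0,1]$. For $1\le k\le\ell$ put $R_k=\sum_{i=1}^k r_i$ and define, for $\Pi\in(0,1/R_k]$, $$S_{F_k}(\Pi)=-\sum_{i=1}^k r_i\Pi\log_2(r_i\Pi)-(1-R_k\Pi)\log_2(1-R_k\Pi)+(1-R_k\Pi)\log_2(C-k)$$ (with $0\log_2 0=0$). Then: (i) $S_{F_\ell}(\Pi)\le S_{F_{\ell-1}}(\Pi)$ for every $\Pi\in(0,1/R_\ell]$; (ii) if $S\in\mathbb R$, $\Pi_\ell\in(0,1/R_\ell]$ and $\Pi_{\ell-1}\in(0,1/R_{\ell-1}]$ satisfy $S_{F_\ell}(\Pi_\ell)=S=S_{F_{\ell-1}}(\Pi_{\ell-1})$, and $S_{F_{\ell-1}}$ is strictly decreasing on a subinterval of $(0,1/R_{\ell-1}]$ containing both $\Pi_\ell$ and $\Pi_{\ell-1}$, then $\Pi_{\ell-1}\ge\Pi_\ell$. Consequently, under these monotonicity hypotheses for each $k$, the bounds satisfy $\Pi^{\max}_{1,1}\ge\Pi^{\max}_{1,2}\ge\cdots\ge\Pi^{\max}_{1,\ell}$, where $\Pi^{\max}_{1,k}$ denotes the solution of $S_{F_k}(\Pi)=S$.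
   Context: $S_{F_k}(\Pi)$ is the Shannon entropy (in bits) of the probability vector on $C$ outcomes consisting of the $k$ masses $r_1\Pi,\dots,r_k\Pi$ (the top-$k$ candidates, with $r_i$ the ratio of the $i$-th candidate's probability to the largest one, $\Pi$) followed by $C-k$ equal masses $(1-R_k\Pi)/(C-k)$. $\Pi^{\max}_{1,k}$ is the top-1 predictability upper bound obtained from the top-$k$-aware Fano scaling for an estimated entropy value $S$; $\Pi^{\max}_{1,1}$ is the classical Fano bound. *)

(* Defs.v *)
From Stdlib Require Import Reals.
Open Scope R_scope.

Definition log2 (x : R) : R := ln x / ln 2.

Definition xlog2x (x : R) : R :=
  if Req_EM_T x 0 then 0 else x * log2 x.

(* Rsum r k = r 1 + ... + r k  (ratios indexed from 1) *)
Fixpoint Rsum (r : nat -> R) (k : nat) : R :=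
  match k with
  | O => 0
  | S k' => Rsum r k' + r (S k')
  end.

Fixpoint sum_xlog (r : nat -> R) (k : nat) (P : R) : R :=
  match k with
  | O => 0
  | S k' => sum_xlog r k' P + xlog2x (r (S k') * P)
  end.

Definition SF (C : nat) (r : nat -> R) (k : nat) (P : R) : R :=
  - sum_xlog r k P
  - xlog2x (1 - Rsum r k * P)
  + (1 - Rsum r k * P) * log2 (INR (C - k)).

Definition strict_decr_on (f : R -> R) (a b : R) : Prop :=
  forall x y, a <= x -> x < y -> y <= b -> f y < f x.

(* Main.v *)
Require Import Defs.
From Stdlib Require Import Reals Lra Lia.
Open Scope R_scope.

Lemma ln_le_m1 t : 0 < t -> ln t <= t - 1.
Proof. intro H. pose proof (exp_ineq1_le (ln t)). rewrite exp_ln in H0 by lra. lra. Qed.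

Definition xlnx (z : R) : R := if Req_EM_T z 0 then 0 else z * ln z.

Lemma xlog2x_eq z : xlog2x z = xlnx z / ln 2.
Proof. unfold xlog2x, xlnx, log2. pose proof ln_lt_2.
  destruct (Req_EM_T z 0). - unfold Rdiv; ring. - field; lra. Qed.

Lemma xlnx_pos z : 0 < z -> xlnx z = z * ln z.
Proof. intro H. unfold xlnx. destruct (Req_EM_T z 0); lra. Qed.

Lemma core q y m : 0 < q -> 0 <= y -> 1 <= m ->
  - xlnx q - xlnx y + y * ln m <= - xlnx (q + y) + (q + y) * ln (m + 1).
Proof.
  intros Hq Hy Hm.
  rewrite (xlnx_pos q Hq), (xlnx_pos (q+y)) by lra.
  destruct (Req_dec y 0) as [E|E].
  - subst y. unfold xlnx. destruct (Req_EM_T 0 0); [|lra].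
    replace (q+0) with q by ring.
    assert (0 <= ln (m+1)). { rewrite <- ln_1. left. apply ln_increasing; lra. }
    nra.
  - rewrite (xlnx_pos y) by lra.
    set (x := q + y).
    assert (Hx : 0 < x) by (unfold x; lra).
    assert (H1 : ln (x / (q*(m+1))) <= x / (q*(m+1)) - 1).
    { apply ln_le_m1. apply Rdiv_lt_0_compat; nra. }
    assert (H2 : ln (x*m / (y*(m+1))) <= x*m / (y*(m+1)) - 1).
    { apply ln_le_m1. apply Rdiv_lt_0_compat; nra. }
    unfold Rdiv in H1, H2.
    rewrite ln_mult, ln_Rinv, ln_mult in H1 by (try apply Rinv_0_lt_compat; nra).
    rewrite ln_mult, ln_mult, ln_Rinv, ln_mult in H2 by (try apply Rinv_0_lt_compat; nra).
    apply Rmult_le_compat_l with (r := q) in H1; [|lra].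
    apply Rmult_le_compat_l with (r := y) in H2; [|lra].
    assert (E1 : q * (x * / (q * (m + 1)) - 1) = x / (m+1) - q) by (field; lra).
    assert (E2 : y * (x * m * / (y * (m + 1)) - 1) = x*m / (m+1) - y) by (field; lra).
    assert (E3 : x / (m+1) + x*m/(m+1) = x) by (field; lra).
    rewrite E1 in H1. rewrite E2 in H2.
    unfold x in *. nra.
Qed.

Lemma step C r k P : (S k < C)%nat -> 0 < r (S k) -> 0 < P ->
  Rsum r (S k) * P <= 1 -> SF C r (S k) P <= SF C r k P.
Proof.
  intros HC Hr HP HR. unfold SF. simpl sum_xlog. simpl Rsum in *.
  assert (Hm : INR (C - k) = INR (C - S k) + 1).
  { replace (C - k)%nat with (S (C - S k)) by lia. apply S_INR. }
  assert (Hm1 : 1 <= INR (C - S k)).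
  { replace 1 with (INR 1) by reflexivity. apply le_INR. lia. }
  rewrite Hm.
  pose proof (core (r (S k) * P) (1 - (Rsum r k + r (S k)) * P) (INR (C - S k))
    ltac:(nra) ltac:(lra) Hm1) as H.
  replace (r (S k) * P + (1 - (Rsum r k + r (S k)) * P)) with (1 - Rsum r k * P) in H by ring.
  rewrite !xlog2x_eq. unfold log2.
  pose proof ln_lt_2.
  assert (E : forall a b, a <= b -> a / ln 2 <= b / ln 2).
  { intros a b Hab. unfold Rdiv. apply Rmult_le_compat_r; [left; apply Rinv_0_lt_compat; lra|lra]. }
  apply E in H. unfold Rdiv in *. nra.
Qed.

Lemma Rsum_ge1 r l : r 1%nat = 1 -> (forall i : nat, (2 <= i <= l)%nat -> 0 < r i <= 1) ->
  forall k, (1 <= k <= l)%nat -> 1 <= Rsum r k.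
Proof.
  intros H1 H2. induction k as [|k IH]; intros Hk; [lia|].
  destruct k. - simpl. lra.
  - change (Rsum r (S (S k))) with (Rsum r (S k) + r (S (S k))). assert (0 < r (S (S k)) <= 1) by (apply H2; lia).
    assert (1 <= Rsum r (S k)) by (apply IH; lia). lra.
Qed.

Lemma stepk C l r : (l < C)%nat -> r 1%nat = 1 ->
  (forall i : nat, (2 <= i <= l)%nat -> 0 < r i <= 1) ->
  forall k P, (2 <= k <= l)%nat -> 0 < P <= 1 / Rsum r k -> SF C r k P <= SF C r (k - 1) P.
Proof.
  intros HC H1 H2 k P Hk HP.
  destruct k as [|k]; [lia|].
  replace (S k - 1)%nat with k by lia.
  assert (1 <= Rsum r (S k)) by (apply (Rsum_ge1 r l); auto; lia).
  apply step; try lia.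
  - apply H2; lia.
  - lra.
  - destruct HP as [_ HP]. apply Rmult_le_compat_l with (r := Rsum r (S k)) in HP; [|lra].
    replace (Rsum r (S k) * (1 / Rsum r (S k))) with 1 in HP by (field; lra). lra.
Qed.

Theorem mainTheorem4 (C l : nat) (r : nat -> R) :
  (3 <= C)%nat -> (2 <= l)%nat -> (l < C)%nat ->
  r 1%nat = 1 ->
  (forall i : nat, (2 <= i <= l)%nat -> 0 < r i <= 1) ->
  (* (i) *)
  (forall P : R, 0 < P <= 1 / Rsum r l ->
     SF C r l P <= SF C r (l - 1) P)
  /\
  (* (ii) *)
  (forall (S Pl Pl1 a b : R),
     0 < Pl <= 1 / Rsum r l ->
     0 < Pl1 <= 1 / Rsum r (l - 1) ->
     SF C r l Pl = S -> SF C r (l - 1) Pl1 = S ->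
     0 < a -> b <= 1 / Rsum r (l - 1) ->
     a <= Pl <= b -> a <= Pl1 <= b ->
     strict_decr_on (SF C r (l - 1)) a b ->
     Pl <= Pl1)
  /\
  (* consequence: Π^max_{1,1} >= Π^max_{1,2} >= ... >= Π^max_{1,l} *)
  (forall (S : R) (Pmax : nat -> R),
     (forall k, (1 <= k <= l)%nat ->
        0 < Pmax k <= 1 / Rsum r k /\ SF C r k (Pmax k) = S) ->
     (forall k, (2 <= k <= l)%nat ->
        exists a b, 0 < a /\ b <= 1 / Rsum r (k - 1) /\
          a <= Pmax k <= b /\ a <= Pmax (k - 1)%nat <= b /\
          strict_decr_on (SF C r (k - 1)) a b) ->
     forall k, (2 <= k <= l)%nat -> Pmax k <= Pmax (k - 1)%nat).
Proof.
  intros H3 H2l HC H1 Hr.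
  pose proof (stepk C l r HC H1 Hr) as St.
  split; [|split].
  - intros P HP. apply St; [lia|exact HP].
  - intros S Pl Pl1 a b HPl HPl1 E1 E2 Ha Hb [Ha1 Hb1] [Ha2 Hb2] Hd.
    destruct (Rle_or_lt Pl Pl1) as [|Hlt]; [assumption|].
    exfalso. pose proof (Hd Pl1 Pl Ha2 Hlt Hb1).
    pose proof (St l Pl ltac:(lia) HPl). lra.
  - intros S Pmax HP Hab k Hk.
    destruct (Hab k Hk) as (a & b & Ha & Hb & [Ha1 Hb1] & [Ha2 Hb2] & Hd).
    destruct (Rle_or_lt (Pmax k) (Pmax (k-1)%nat)) as [|Hlt]; [assumption|].
    exfalso. pose proof (Hd _ _ Ha2 Hlt Hb1).
    destruct (HP k ltac:(lia)) as [HPk E1].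
    destruct (HP (k-1)%nat ltac:(lia)) as [_ E2].
    pose proof (St k (Pmax k) Hk HPk). lra.
Qed.
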